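(* Let $\mathcal{D}$ be a domain with $\mathcal{SP}\subseteq\mathcal{D}\subseteq\mathcal{U}$ and let $\varphi$ be an own-peak-only rule on $\mathcal{E}_{\mathcal{D}}$ that satisfies the equal division guarantee and not obvious manipulability (NOM). Let $i\in N$ and $(R,\Omega)\in\mathcal{E}_{\mathcal{D}}$. If $p(R_i)$ is a singleton, then $\varphi_i(R,\Omega)$ lies in the closed interval between $p(R_i)$ and $\frac{\Omega}{n}$.
   Context: Let $N=\{1,\dots,n\}$ be a finite set of agents. $\mathcal{U}$ is the set of continuous complete preorders $R_i$ on $\mathbb{R}_+\cup\{\infty\}$ ($P_i$ strict, $I_i$ indifference), with peak $p(R_i)=\{x:xR_iy\ \forall y\}$ (identified with its element when a singleton). $R_i$ is single-peaked if $p(R_i)$ is a singleton and for $x,x'\in\mathbb{R}_+$, $xP_ix'$ whenever $x'<x\le p(R_i)$ or $p(R_i)\le x<x'$; $\mathcal{SP}$ is the set of these. For $\mathcal{D}\subseteq\mathcal{U}$, an economy is $(R,\Omega)$ with $R\in\mathcal{D}^n$, $\Omega>0$; $\mathcal{E}_{\mathcal{D}}$ is the set of economies; a rule is a map $\varphi:\mathcal{E}_{\mathcal{D}}\to\mathbb{R}^n_+$ with $\sum_j\varphi_j(R,\Omega)=\Omega$. Own-peak-only: for $R_i'\in\mathcal{D}$ with $p(R_i')=p(R_i)$, $\varphi_i(R,\Omega)=\varphi_i(R_i',R_{-i},\Omega)$. Equal division guarantee: $\Omega/n\in p(R_i)$ implies $\varphi_i(R,\Omega)I_i\Omega/n$.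 Option set $O^\varphi(R_i,\Omega)=\{\varphi_i(R_i,R_{-i},\Omega):R_{-i}\in\mathcal{D}^{n-1}\}$; $R_i'\in\mathcal{D}$ is a manipulation at $(R_i,\Omega)$ if $\varphi_i(R_i',R_{-i},\Omega)P_i\varphi_i(R_i,R_{-i},\Omega)$ for some $R_{-i}$, an obvious manipulation if moreover each $x'\in O^\varphi(R_i',\Omega)$ satisfies $x'P_ix$ for some $x\in O^\varphi(R_i,\Omega)$; NOM means no obvious manipulation exists. *)

(* Defs.v *)
From Stdlib Require Import Reals.
From mathcomp Require Import ssreflect ssrfun ssrbool eqtype ssrnat seq fintype bigop.

Set Implicit Arguments.
Unset Strict Implicit.

Local Open Scope R_scope.

(* R_+ \cup {infinity}: Some r (r >= 0) is a finite amount, None is infinity. *)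
Definition ext := option R.

Definition valid (x : ext) : Prop :=
  match x with Some r => 0 <= r | None => True end.

Definition ext_le (x y : ext) : Prop :=
  match x, y with
  | Some a, Some b => a <= b
  | _, None => True
  | None, Some _ => False
  end.

Definition ext_lt (x y : ext) : Prop := ext_le x y /\ x <> y.

Definition ext_conv (u : nat -> ext) (l : ext) : Prop :=
  match l with
  | Some r => forall eps, 0 < eps -> exists N, forall k, (N <= k)%nat ->
                exists a, u k = Some a /\ Rabs (a - r) < eps
  | None => forall M, exists N, forall k, (N <= k)%nat ->
                match u k with Some a => M < a | None => True end
  end.

(* closed subset of [0,infinity] (sequential closedness; [0,infinity] is metrizable) *)
Definition ext_closed (S : ext -> Prop) : Prop :=
  forall (u : nat -> ext) (l : ext),
    (forall k, valid (u k) /\ S (u k)) -> ext_conv u l -> S l.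

(* a preference relation R_i : "x R_i y" = x is at least as good as y *)
Definition pref := ext -> ext -> Prop.

Definition strict (Ri : pref) (x y : ext) : Prop := Ri x y /\ ~ Ri y x.
Definition indiff (Ri : pref) (x y : ext) : Prop := Ri x y /\ Ri y x.

Definition complete_preorder (Ri : pref) : Prop :=
  (forall x, valid x -> Ri x x) /\
  (forall x y z, valid x -> valid y -> valid z -> Ri x y -> Ri y z -> Ri x z) /\
  (forall x y, valid x -> valid y -> Ri x y \/ Ri y x).

Definition pref_continuous (Ri : pref) : Prop :=
  forall y, valid y ->
    ext_closed (fun x => Ri x y) /\ ext_closed (fun x => Ri y x).

Definition in_U (Ri : pref) : Prop := complete_preorder Ri /\ pref_continuous Ri.

Definition peak (Ri : pref) (x : ext) : Prop :=
  valid x /\ forall y, valid y -> Ri x y.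

Definition peak_singleton (Ri : pref) (p : ext) : Prop :=
  forall x, peak Ri x <-> x = p.

Definition in_SP (Ri : pref) : Prop :=
  in_U Ri /\ exists p, peak_singleton Ri p /\
    forall x x' : R, 0 <= x -> 0 <= x' ->
      ((x' < x /\ ext_le (Some x) p) \/ (ext_le p (Some x) /\ x < x')) ->
      strict Ri (Some x) (Some x').

Definition domain := pref -> Prop.

Definition profile (n : nat) := 'I_n -> pref.

Definition in_Dn (D : domain) n (Rp : profile n) : Prop := forall j, D (Rp j).

Definition upd n (Rp : profile n) (i : 'I_n) (Ri : pref) : profile n :=
  fun j => if j == i then Ri else Rp j.

Definition rule_fn (n : nat) := profile n -> R -> 'I_n -> R.

Definition is_rule (D : domain) n (phi : rule_fn n) : Prop :=
  forall (Rp : profile n) (Om : R), in_Dn D Rp -> 0 < Om ->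
    (forall j, 0 <= phi Rp Om j) /\ \big[Rplus/0]_(j < n) phi Rp Om j = Om.

Definition own_peak_only (D : domain) n (phi : rule_fn n) : Prop :=
  forall (Rp : profile n) (Om : R) (i : 'I_n) (Ri' : pref),
    in_Dn D Rp -> 0 < Om -> D Ri' ->
    (forall x, peak Ri' x <-> peak (Rp i) x) ->
    phi Rp Om i = phi (upd Rp i Ri') Om i.

Definition equal_division_guarantee (D : domain) n (phi : rule_fn n) : Prop :=
  forall (Rp : profile n) (Om : R) (i : 'I_n),
    in_Dn D Rp -> 0 < Om ->
    peak (Rp i) (Some (Om / INR n)) ->
    indiff (Rp i) (Some (phi Rp Om i)) (Some (Om / INR n)).

Definition option_set (D : domain) n (phi : rule_fn n) (i : 'I_n) (Ri : pref) (Om : R)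
  (x : R) : Prop :=
  exists Rp' : profile n, in_Dn D Rp' /\ phi (upd Rp' i Ri) Om i = x.

Definition manipulation (D : domain) n (phi : rule_fn n) (i : 'I_n) (Ri Ri' : pref)
  (Om : R) : Prop :=
  D Ri' /\ exists Rp' : profile n, in_Dn D Rp' /\
    strict Ri (Some (phi (upd Rp' i Ri') Om i)) (Some (phi (upd Rp' i Ri) Om i)).

Definition obvious_manipulation (D : domain) n (phi : rule_fn n) (i : 'I_n)
  (Ri Ri' : pref) (Om : R) : Prop :=
  manipulation D phi i Ri Ri' Om /\
  forall x', option_set D phi i Ri' Om x' ->
    exists x, option_set D phi i Ri Om x /\ strict Ri (Some x') (Some x).

Definition NOM (D : domain) n (phi : rule_fn n) : Prop :=
  forall (i : 'I_n) (Ri Ri' : pref) (Om : R),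
    D Ri -> 0 < Om -> ~ obvious_manipulation D phi i Ri Ri' Om.

Definition ext_between (a b c : ext) : Prop :=
  (ext_le a c /\ ext_le c b) \/ (ext_le b c /\ ext_le c a).

(* Main.v *)
Require Import Defs.
From Stdlib Require Import Reals Lra Psatz Classical.
From mathcomp Require Import ssreflect ssrfun ssrbool eqtype ssrnat seq fintype bigop.

Local Open Scope R_scope.

Definition H (u : ext) : R := match u with Some y => y / (1 + y) | None => 1 end.

Definition G (a b c t : R) : R := - (a * Rmax 0 (c - t) + b * Rmax 0 (t - c)).

Definition pref_of (g : ext -> R) : pref := fun x y => g y <= g x.

Lemma H_diff y z : 0 <= y -> 0 <= z -> H (Some y) - H (Some z) = (y - z) / ((1 + y) * (1 + z)).
Proof. move=> hy hz /=. field. lra. Qed.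

Lemma H_lt1 y : 0 <= y -> 0 <= H (Some y) < 1.
Proof.
move=> hy /=. split.
- have := Rinv_0_lt_compat (1 + y) ltac:(lra). rewrite /Rdiv; nra.
- apply/(Rmult_lt_reg_r (1 + y)); first lra.
  rewrite /Rdiv Rmult_assoc Rinv_l; lra.
Qed.

Lemma H_lt y z : 0 <= y -> 0 <= z -> y < z -> H (Some y) < H (Some z).
Proof.
move=> hy hz hyz. have := @H_diff y z hy hz.
have hp : 0 < (1 + y) * (1 + z) by nra.
have : (y - z) / ((1 + y) * (1 + z)) < 0.
{ rewrite /Rdiv. have := Rinv_0_lt_compat _ hp. nra. }
lra.
Qed.

Lemma H_lip y z : 0 <= y -> 0 <= z -> Rabs (H (Some y) - H (Some z)) <= Rabs (y - z).
Proof.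
move=> hy hz. rewrite H_diff //.
have hp : 1 <= (1 + y) * (1 + z) by nra.
have := Rinv_le_contravar 1 _ Rlt_0_1 hp. rewrite Rinv_1.
have := Rinv_0_lt_compat ((1 + y) * (1 + z)) ltac:(lra).
rewrite /Rdiv. set d := / _. move=> h1 h2.
rewrite /Rabs; repeat case: Rcase_abs => ?; nra.
Qed.

Lemma H_le_iff u v : valid u -> valid v -> (ext_le u v <-> H u <= H v).
Proof.
case: u => [y|]; case: v => [z|] /= hu hv.
- split => h.
  + case: (Rle_lt_or_eq_dec _ _ h) => [h'|->]; [left; exact: (@H_lt y z hu hv h') | right; reflexivity].
  + case: (Rle_or_lt y z) => // h'. have := @H_lt z y hv hu h'. simpl. lra.
- have := @H_lt1 y hu. split; intros; try exact I; try contradiction; simpl in *; lra.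
- have := @H_lt1 z hv. split; intros; try exact I; try contradiction; simpl in *; lra.
- split; intros; try exact I; try contradiction; simpl in *; lra.
Qed.

Lemma H_inj u v : valid u -> valid v -> H u = H v -> u = v.
Proof.
move=> hu hv e.
have h1 : ext_le u v by apply/H_le_iff => //; lra.
have h2 : ext_le v u by apply/H_le_iff => //; lra.
move: h1 h2 {e}; case: u hu => [y|]; case: v hv => [z|] //= _ _ h1 h2.
by rewrite (Rle_antisym _ _ h1 h2).
Qed.

Lemma H_cont (s : nat -> ext) l : (forall k, valid (s k)) -> ext_conv s l ->
  forall eps, 0 < eps -> exists N, forall k, (N <= k)%nat -> Rabs (H (s k) - H l) < eps.
Proof.
move=> hv; case: l => [r|] /= hc eps he.
- have hr : 0 <= r.
  { case: (Rle_or_lt 0 r) => // hr.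
    have [N hN] := hc (- r) ltac:(lra).
    have [a [ea ha]] := hN N (leqnn N). have := hv N. rewrite ea /=.
    move: ha; rewrite /Rabs; case: Rcase_abs => h0 h1 h2; lra. }
  have [N hN] := hc eps he. exists N => k hk.
  have [a [ea ha]] := hN k hk. have := hv k. rewrite ea /= => ha0.
  have := @H_lip a r ha0 hr. simpl. lra.
- have [N hN] := hc (/ eps). exists N => k hk. have := hN k hk. have := hv k.
  case: (s k) => [a|] /= ha hM; last by rewrite Rminus_diag Rabs_R0.
  have hie := Rinv_0_lt_compat _ he.
  have -> : a / (1 + a) - 1 = - / (1 + a) by field; lra.
  rewrite Rabs_Ropp Rabs_right; last (left; apply: Rinv_0_lt_compat; lra).
  rewrite -(Rinv_inv eps). apply: Rinv_lt_contravar; nra.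
Qed.

Lemma G_lip a b c t t' : 0 <= a -> 0 <= b -> Rabs (G a b c t - G a b c t') <= (a + b) * Rabs (t - t').
Proof.
move=> ha hb. rewrite /G /Rmax.
repeat case: Rle_dec => ? ; rewrite /Rabs; repeat case: Rcase_abs => ?; nra.
Qed.

Lemma G_le0 a b c t : 0 <= a -> 0 <= b -> G a b c t <= 0.
Proof. move=> ha hb. rewrite /G /Rmax. repeat case: Rle_dec => ?; nra. Qed.

Lemma G_c a b c : G a b c c = 0.
Proof. rewrite /G /Rmax Rminus_diag. case: Rle_dec => ?; lra. Qed.

Lemma G_eq0 a b c t : 0 < a -> 0 < b -> G a b c t = 0 -> t = c.
Proof. move=> ha hb. rewrite /G /Rmax. repeat case: Rle_dec => ?; nra. Qed.

Lemma G_left a b c t t' : 0 < a -> 0 < b -> t' < t <= c -> G a b c t' < G a b c t.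
Proof. move=> ha hb ht. rewrite /G /Rmax. repeat case: Rle_dec => ?; nra. Qed.

Lemma G_right a b c t t' : 0 < a -> 0 < b -> c <= t < t' -> G a b c t' < G a b c t.
Proof. move=> ha hb ht. rewrite /G /Rmax. repeat case: Rle_dec => ?; nra. Qed.
Definition gg (a b c : R) (u : ext) : R := G a b c (H u).

Definition gcont (g : ext -> R) : Prop :=
  forall s l, (forall k, valid (s k)) -> ext_conv s l ->
  forall eps, 0 < eps -> exists N, forall k, (N <= k)%nat -> Rabs (g (s k) - g l) < eps.

Lemma gg_cont a b c : 0 <= a -> 0 <= b -> gcont (gg a b c).
Proof.
move=> ha hb s l hv hc eps he.
have [N hN] := @H_cont s l hv hc (eps / (a + b + 1)) ltac:(apply: Rmult_lt_0_compat; [lra|apply: Rinv_0_lt_compat; lra]).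
exists N => k hk. have := hN k hk. rewrite /gg.
have := @G_lip a b c (H (s k)) (H l) ha hb.
have -> : eps / (a + b + 1) = eps * / (a + b + 1) by [].
have hi := Rinv_0_lt_compat (a + b + 1) ltac:(lra).
have e1 : (a + b + 1) * / (a + b + 1) = 1 by field; lra.
move=> h1 h2. nra.
Qed.

Lemma pref_of_U g : gcont g -> in_U (pref_of g).
Proof.
move=> hg. split.
- split; [|split].
  + move=> x _; rewrite /pref_of; lra.
  + move=> x y z _ _ _; rewrite /pref_of => h1 h2; lra.
  + move=> x y _ _; rewrite /pref_of. case: (Rle_or_lt (g x) (g y)) => h; [right|left]; lra.
- move=> y hy; split => s l hs hc; rewrite /pref_of.
  + case: (Rle_or_lt (g y) (g l)) => // hl.
    have [N hN] := hg s l (fun k => proj1 (hs k)) hc (g y - g l) ltac:(lra).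
    have := hN N (leqnn N). have := proj2 (hs N). rewrite /pref_of => h1.
    rewrite /Rabs; case: Rcase_abs => h0 h2; lra.
  + case: (Rle_or_lt (g l) (g y)) => // hl.
    have [N hN] := hg s l (fun k => proj1 (hs k)) hc (g l - g y) ltac:(lra).
    have := hN N (leqnn N). have := proj2 (hs N). rewrite /pref_of => h1.
    rewrite /Rabs; case: Rcase_abs => h0 h2; lra.
Qed.

Lemma gg_peak a b p : 0 < a -> 0 < b -> valid p ->
  peak_singleton (pref_of (gg a b (H p))) p.
Proof.
move=> ha hb hp x; split.
- move=> [hx hpk]. have := hpk p hp. rewrite /pref_of /gg G_c => h.
  have := @G_le0 a b (H p) (H x) ltac:(lra) ltac:(lra) => h'.
  apply: H_inj => //. apply: (@G_eq0 a b (H p) (H x) ha hb). lra.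
- move=> ->; split => // y hy. rewrite /pref_of /gg G_c. apply: G_le0; lra.
Qed.

Lemma gg_SP a b p : 0 < a -> 0 < b -> valid p -> in_SP (pref_of (gg a b (H p))).
Proof.
move=> ha hb hp. split; first by apply: pref_of_U; apply: gg_cont; lra.
exists p; split; first exact: gg_peak.
move=> x x' hx hx' hc.
have hlt : gg a b (H p) (Some x') < gg a b (H p) (Some x).
{ case: hc => [[h1 h2]|[h1 h2]]; rewrite /gg.
  - apply: G_left => //. split; first exact: (@H_lt x' x hx' hx h1).
    by apply/(@H_le_iff (Some x) p hx hp).
  - apply: G_right => //. split; last exact: (@H_lt x x' hx hx' h2).
    by apply/(@H_le_iff p (Some x) hp hx). }
rewrite /strict /pref_of; lra.
Qed.

Lemma choose_ab c hm hx : ~ ((c <= hx /\ hx <= hm) \/ (hm <= hx /\ hx <= c)) ->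
  exists a b, 0 < a /\ 0 < b /\ G a b c hx < G a b c hm.
Proof.
move=> hn.
have [[h1 h2]|[h1 h2]] : (hx < c /\ hx < hm) \/ (c < hx /\ hm < hx).
{ case: (Rlt_le_dec hx c) => h1; case: (Rlt_le_dec hx hm) => h2.
  - by left.
  - case: (Rlt_le_dec hm c) => h3; first (exfalso; apply: hn; right; lra).
    exfalso; apply: hn; left; lra.
  - case: (Rlt_le_dec hm c) => h3; first (exfalso; apply: hn; right; lra).
    exfalso; apply: hn; left; lra.
  - case: (Rle_lt_dec hx hm) => h3; first (exfalso; apply: hn; left; lra).
    case: (Rle_lt_dec hx c) => h4; first (exfalso; apply: hn; right; lra).
    by right. }
- set d := c - hx.
  have hd : 0 < d by rewrite /d; lra.
  have hr := Rabs_pos (hm - c).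
  set a := 1 + Rabs (hm - c) / d.
  have ea : a * d = d + Rabs (hm - c) by rewrite /a; field; lra.
  have hq : 0 <= Rabs (hm - c) / d by apply: Rmult_le_pos => //; apply: Rlt_le; apply: Rinv_0_lt_compat.
  exists a, 1. split; first (rewrite /a; lra). split; first lra.
  rewrite /G /Rmax. move: ea; rewrite /d.
  repeat case: Rle_dec => ?; rewrite /Rabs; repeat case: Rcase_abs => ?; move=> ea; nra.
- set d := hx - c.
  have hd : 0 < d by rewrite /d; lra.
  have hr := Rabs_pos (hm - c).
  set b := 1 + Rabs (hm - c) / d.
  have eb : b * d = d + Rabs (hm - c) by rewrite /b; field; lra.
  have hq : 0 <= Rabs (hm - c) / d by apply: Rmult_le_pos => //; apply: Rlt_le; apply: Rinv_0_lt_compat.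
  exists 1, b. split; first lra. split; first (rewrite /b; lra).
  rewrite /G /Rmax. move: eb; rewrite /d.
  repeat case: Rle_dec => ?; rewrite /Rabs; repeat case: Rcase_abs => ?; move=> eb; nra.
Qed.

Theorem lemma3 (n : nat) (D : domain) (phi : rule_fn n) :
  (forall Ri, in_SP Ri -> D Ri) ->
  (forall Ri, D Ri -> in_U Ri) ->
  is_rule D phi ->
  own_peak_only D phi ->
  equal_division_guarantee D phi ->
  NOM D phi ->
  forall (i : 'I_n) (Rp : profile n) (Om : R),
    in_Dn D Rp -> 0 < Om ->
    forall p : ext, peak_singleton (Rp i) p ->
      ext_between p (Some (Om / INR n)) (Some (phi Rp Om i)).
Proof.
move=> HSP HU Hrule Hopo Hedg Hnom i Rp Om HRp HOm p Hp.
have hn : 0 < INR n.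
{ apply: lt_0_INR. apply/ltP. exact: leq_ltn_trans (leq0n i) (ltn_ord i). }
have hm : 0 < Om / INR n by apply: Rmult_lt_0_compat => //; apply: Rinv_0_lt_compat.
set m := Om / INR n in hm *.
set x := phi Rp Om i.
have hx0 : 0 <= x := (proj1 (Hrule Rp Om HRp HOm)) i.
have hpv : valid p := proj1 (proj2 (Hp p) erefl).
have hmv : valid (Some m) by rewrite /=; lra.
apply: NNPP => hnb.
have hnb' : ~ ((H p <= H (Some x) /\ H (Some x) <= H (Some m)) \/
               (H (Some m) <= H (Some x) /\ H (Some x) <= H p)).
{ move=> hh; apply: hnb. case: hh => [[h1 h2]|[h1 h2]]; [left|right]; split;
  first [ apply/(@H_le_iff p (Some x) hpv hx0) | apply/(@H_le_iff (Some x) p hx0 hpv)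
        | apply/(@H_le_iff (Some m) (Some x) hmv hx0) | apply/(@H_le_iff (Some x) (Some m) hx0 hmv) ];
  assumption. }
have [a [b [ha [hb hlt]]]] := @choose_ab (H p) (H (Some m)) (H (Some x)) hnb'.
set R2 := pref_of (gg a b (H p)).
set R1 := pref_of (gg 1 1 (H (Some m))).
have D2 : D R2 := HSP _ (@gg_SP a b p ha hb hpv).
have D1 : D R1 := HSP _ (@gg_SP 1 1 (Some m) Rlt_0_1 Rlt_0_1 hmv).
have upd_in : forall Rp' R', in_Dn D Rp' -> D R' -> in_Dn D (upd Rp' i R').
{ move=> Rp' R' h1 h2 j; rewrite /upd; by case: (j == i). }
have upd_i : forall Rp' R', upd Rp' i R' i = R' by move=> Rp' R'; rewrite /upd eqxx.
have hopt1 : forall Rp', in_Dn D Rp' -> phi (upd Rp' i R1) Om i = m.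
{ move=> Rp' hRp'.
  have hU := upd_in Rp' R1 hRp' D1.
  have hphi0 : 0 <= phi (upd Rp' i R1) Om i := (proj1 (Hrule _ Om hU HOm)) i.
  have pk : peak R1 (Some m) := proj2 (@gg_peak 1 1 (Some m) Rlt_0_1 Rlt_0_1 hmv (Some m)) erefl.
  have := Hedg (upd Rp' i R1) Om i hU HOm. rewrite upd_i => /(_ pk) [h1 _].
  move: h1; rewrite /R1 /pref_of /gg G_c => h1.
  have h2 := @G_le0 1 1 (H (Some m)) (H (Some (phi (upd Rp' i R1) Om i))) ltac:(lra) ltac:(lra).
  have e := @G_eq0 1 1 (H (Some m)) _ Rlt_0_1 Rlt_0_1 (Rle_antisym _ _ h2 h1).
  have := @H_inj (Some (phi (upd Rp' i R1) Om i)) (Some m) hphi0 hmv e. by case. }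
have hx2 : phi (upd Rp i R2) Om i = x.
{ symmetry; apply: Hopo => //.
  move=> y; split => h.
  - apply/(proj2 (Hp y)). exact: (proj1 (@gg_peak a b p ha hb hpv y) h).
  - apply/(proj2 (@gg_peak a b p ha hb hpv y)). exact: (proj1 (Hp y) h). }
have hstrict : strict R2 (Some m) (Some x).
{ rewrite /strict /R2 /pref_of /gg. split; lra. }
apply: (Hnom i R2 R1 Om D2 HOm). split.
- split => //. exists Rp; split => //. rewrite hopt1 // hx2. exact: hstrict.
- move=> x' [Rp' [hRp' <-]]. exists x; split; last by rewrite hopt1.
  exists Rp; split => //.
Qed.
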